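(* Fix $\epsilon>0$ and let $Q=\{(x,y)\in\mathbb R^2: x>y+\epsilon\}$ (equivalently $Q=\{(x,y):(y,x)\notin P\}$ where $(x,y)\in P\iff x+\epsilon\geq y$). Then there is no family $\mathcal V$ (of any cardinality) of continuous functions $v:\mathbb R\to\mathbb R$ such that for all $x,y\in\mathbb R$: $(x,y)\in Q$ if and only if $v(x)\geq v(y)$ for all $v\in\mathcal V$ and $v(x)>v(y)$ for some $v\in\mathcal V$. In other words, $P$ admits no continuous embedding into $\mathbb R^I$ with the Pareto order, for any index set $I$.
   Context: The Pareto order on $\mathbb R^I$: $(x_\alpha)\succ(y_\alpha)$ iff $x_\alpha\geq y_\alpha$ for all $\alpha\in I$ and $x_\alpha>y_\alpha$ for some $\alpha\in I$. *)

(* Defs.v *)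
From Stdlib Require Import Reals.
Open Scope R_scope.

Definition pareto_gt {I : Type} (x y : I -> R) : Prop :=
  (forall a : I, x a >= y a) /\ (exists a : I, x a > y a).

Definition Qrel (eps : R) (x y : R) : Prop := x > y + eps.

(* Main.v *)
Require Import Defs.
From Stdlib Require Import Reals Lra.
Open Scope R_scope.

Lemma cont_ge (f : R -> R) (c x0 : R) : continuity_pt f x0 ->
  (forall h, 0 < h -> f (x0 + h) >= c) -> f x0 >= c.
Proof.
  intros Hc Hh.
  destruct (Rge_dec (f x0) c) as [H|H]; [exact H|].
  exfalso.
  assert (Hd : 0 < c - f x0) by lra.
  destruct (Hc (c - f x0) Hd) as [al [Hal Hx]].
  assert (Hq := Hx (x0 + al/2)).
  assert (Hq' : R_dist (f (x0 + al/2)) (f x0) < c - f x0).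
  { apply Hq. split. unfold D_x, no_cond. split; [exact I|lra].
    simpl; unfold R_dist. replace (x0 + al/2 - x0) with (al/2) by ring.
    rewrite Rabs_right; lra. }
  unfold R_dist in Hq'. apply Rabs_def2 in Hq'.
  specialize (Hh (al/2) ltac:(lra)). lra.
Qed.

Theorem mainTheorem7 (eps : R) (Heps : 0 < eps) :
  ~ exists (I : Type) (v : I -> R -> R),
      (forall a : I, continuity (v a)) /\
      (forall x y : R, Qrel eps x y <-> pareto_gt (fun a => v a x) (fun a => v a y)).
Proof.
  intros [I [v [Hc HQ]]].
  assert (Hge : forall a, v a eps >= v a 0).
  { intro a. apply cont_ge; [apply Hc|].
    intros h Hh. assert (Qrel eps (eps + h) 0) by (unfold Qrel; lra).
    apply HQ in H. destruct H as [H _]. apply H. }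
  assert (Heq : forall a, v a eps = v a 0).
  { intro a. destruct (Rge_dec (v a 0) (v a eps)) as [H|H]; [specialize (Hge a); lra|].
    exfalso. assert (Hp : pareto_gt (fun a => v a eps) (fun a => v a 0)).
    { split; [exact Hge| exists a; lra]. }
    apply HQ in Hp. unfold Qrel in Hp. lra. }
  assert (H2 : Qrel eps (2*eps) 0) by (unfold Qrel; lra).
  apply HQ in H2. destruct H2 as [Hall [a Ha]].
  assert (Hp : pareto_gt (fun a => v a (2*eps)) (fun a => v a eps)).
  { split. intro b. rewrite Heq. apply Hall. exists a. simpl. rewrite Heq. exact Ha. }
  apply HQ in Hp. unfold Qrel in Hp. lra.
Qed.
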